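(* There is a polynomial $p$ such that for all $n,s\ge1$, with $N=2^n$, the polynomial map $\mathcal{G}^{\mathrm{SSSV}}_{n,\lceil\log_2 s\rceil}$ is a $p(\log s,n)$-$\Sigma\Pi\Sigma$-succinct generator for the class of polynomials $F\in\mathbb{F}[X_1,\ldots,X_N]$ having at most $s$ monomials.
   Context: Let $P(z_1,\ldots,z_n,x_1,\ldots,x_n)=\prod_{i=1}^n(z_ix_i+(1-z_i))$, $Q^{\mathrm{SSV}}_{n,k}(y,z,x)=\sum_{j=1}^k y_jP(z_j,x)$ with $z_j=(z_{j,1},\ldots,z_{j,n})$, and $Q^{\mathrm{SSSV}}_{n,k}=Q^{\mathrm{SSV}}_{n,k}+\prod_{i=1}^n(x_i+1)$. $\mathcal{G}^{\mathrm{SSSV}}_{n,k}(y,z)$ is the coefficient vector of $Q^{\mathrm{SSSV}}_{n,k}$ as a multilinear polynomial in $x$, with coordinates indexed by subsets $S\subseteq[n]$ (monomials $x_S=\prod_{i\in S}x_i$) and identified with $X_1,\ldots,X_N$ via $i-1=\sum_{k\in S}2^{k-1}$. A polynomial map $\mathcal{G}:\mathbb{F}^m\to\mathbb{F}^{2^n}$ is an $s'$-$\Sigma\Pi\Sigma$-succinct generator for a class $\mathcal{D}$ of $N$-variate polynomials if (i) for every $\alpha\in\mathbb{F}^m$ the multilinear polynomial $\sum_S\mathcal{G}_S(\alpha)x_S$ is computed by a multilinear depth-3 $\Sigma\Pi\Sigma$ formula of size at most $s'$, and (ii) for every $F\in\mathcal{D}$, $F\not\equiv0$ iff $F\circ\mathcal{G}\not\equiv0$.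 *)

(* Defs.v *)
From HB Require Import structures.
From mathcomp Require Import all_boot all_order all_algebra.
From mathcomp Require Import mpoly.
Set Implicit Arguments. Unset Strict Implicit. Unset Printing Implicit Defensive.
Import Order.TTheory GRing.Theory Num.Theory.
Local Open Scope ring_scope.

Section Defs.
Variable F : fieldType.

(* Seed variables: m = k + k*n variables; y_j (j < k) and z_{j,i} (j<k, i<n). *)
Definition nseed (n k : nat) : nat := (k + k * n)%N.

Definition yvar (n k : nat) (j : 'I_k) : {mpoly F[nseed n k]} :=
  'X_(lshift (k * n) j).
Definition zvar (n k : nat) (j : 'I_k) (i : 'I_n) : {mpoly F[nseed n k]} :=
  'X_(rshift k (mxvec_index j i)).

Definition Pxz (n k : nat) (j : 'I_k) : {mpoly {mpoly F[nseed n k]}[n]} :=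
  \prod_(i < n) ((zvar j i)%:MP * 'X_i + (1 - zvar j i)%:MP).

Definition Q_SSV (n k : nat) : {mpoly {mpoly F[nseed n k]}[n]} :=
  \sum_(j < k) (yvar n j)%:MP * Pxz n j.

Definition Q_SSSV (n k : nat) : {mpoly {mpoly F[nseed n k]}[n]} :=
  Q_SSV n k + \prod_(i < n) ('X_i + 1).

Definition mnmS (n : nat) (S : {set 'I_n}) : 'X_{1..n} :=
  [multinom (i \in S : nat) | i < n].

Definition G_SSSV (n k : nat) (S : {set 'I_n}) : {mpoly F[nseed n k]} :=
  (Q_SSSV n k)@_(mnmS S).

(* the subset S corresponding to the coordinate of index i (0-based):
   i = \sum_{k in S} 2^k, i.e. S is the set of binary digits of i *)
Definition set_of_index (n : nat) (i : nat) : {set 'I_n} :=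
  [set k : 'I_n | odd (i %/ 2 ^ k)].

(* An affine form c + sum_i a_i x_i; a product gate is a list of affine
   forms; a formula is a list of product gates (top sum gate). *)
Definition affine (n : nat) := (F * {ffun 'I_n -> F})%type.
Definition spsformula (n : nat) := seq (seq (affine n)).

Definition affine_poly (n : nat) (l : affine n) : {mpoly F[n]} :=
  l.1%:MP + \sum_(i < n) l.2 i *: 'X_i.

Definition sps_poly (n : nat) (f : spsformula n) : {mpoly F[n]} :=
  \sum_(P <- f) \prod_(l <- P) affine_poly l.

Definition affine_supp (n : nat) (l : affine n) : {set 'I_n} :=
  [set i | l.2 i != 0].

Definition sps_multilinear (n : nat) (f : spsformula n) : bool :=
  all (fun P : seq (affine n) =>
         [forall j1 : 'I_(size P), forall j2 : 'I_(size P),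
            (j1 < j2)%N ==>
            [disjoint affine_supp (nth (0, [ffun=> 0]) P j1)
                    & affine_supp (nth (0, [ffun=> 0]) P j2)]]) f.

(* size: one top sum gate, plus for each product gate 1, plus for each
   affine form (a sum gate with its constant) 1 plus its number of
   variable inputs *)
Definition sps_size (n : nat) (f : spsformula n) : nat :=
  (1 + \sum_(P <- f) (1 + \sum_(l <- P) (1 + #|affine_supp l|)))%N.

(* s' is a rational size bound (it is the value p(log s, n) of a polynomial) *)
Definition computed_by_mlsps (n : nat) (s' : rat) (p : {mpoly F[n]}) : Prop :=
  exists f : spsformula n,
    [/\ sps_multilinear f, ((sps_size f)%:R <= s')%R & sps_poly f = p].

(* G : F^m -> F^{2^n} given by polynomials indexed by subsets of [n];
   the coordinate indexed by S is the variable X_{i+1} with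
   i = sum_{k in S} 2^k. *)
Definition succinct_generator (n m : nat) (s' : rat)
    (G : {set 'I_n} -> {mpoly F[m]}) (D : {mpoly F[2 ^ n]} -> Prop) : Prop :=
  (forall alpha : 'I_m -> F,
     computed_by_mlsps s' (\sum_(S : {set 'I_n}) (G S).@[alpha] *: 'X_[mnmS S]))
  /\
  (forall P : {mpoly F[2 ^ n]}, D P ->
     (P != 0) = (P \mPo [tuple G (set_of_index n i) | i < 2 ^ n] != 0)).

Definition sparse (N s : nat) (P : {mpoly F[N]}) : Prop :=
  (size (msupp P) <= s)%N.

End Defs.

(* Main.v *)
Require Import Defs.
From HB Require Import structures.
From mathcomp Require Import all_boot all_order all_algebra.
From mathcomp Require Import mpoly.
Import Order.TTheory GRing.Theory Num.Theory.
Local Open Scope ring_scope.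
Set Implicit Arguments. Unset Strict Implicit. Unset Printing Implicit Defensive.
From mathcomp Require Import ring.
Lemma prodX_set (R : comNzRingType) n (S : {set 'I_n}) :
  \prod_(i in S) 'X_i = 'X_[mnmS S] :> {mpoly R[n]}.
Proof.
symmetry; rewrite mpolyXE_id (bigID (mem S)) /= [X in _ * X = _]big1 ?mulr1.
  by apply: eq_bigr => i iS; rewrite mnmE iS expr1.
by move=> i /negbTE iS; rewrite mnmE iS expr0.
Qed.

Lemma expand_prod (R : comNzRingType) n (a b : 'I_n -> R) :
  \prod_(i < n) (a i *: 'X_i + (b i)%:MP) =
  \sum_(S : {set 'I_n}) (\prod_(i in S) a i * \prod_(i in ~: S) b i) *: 'X_[mnmS S]
   :> {mpoly R[n]}.
Proof.
pose G (i : 'I_n) (x : bool) : {mpoly R[n]} := if x then a i *: 'X_i else (b i)%:MP.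
transitivity (\prod_(i < n) \sum_(x : bool) G i x).
  by apply: eq_bigr => i _; rewrite big_bool /= addrC.
rewrite bigA_distr_bigA /=.
rewrite (reindex (fun S : {set 'I_n} => [ffun i => i \in S])) /=; last first.
  exists (fun f : {ffun 'I_n -> bool} => [set i | f i]) => [S _|f _].
    by apply/setP => i; rewrite inE ffunE.
  by apply/ffunP => i; rewrite ffunE inE.
apply: eq_bigr => S _.
rewrite (bigID (mem S)) /=.
rewrite (eq_bigr (fun i => (a i)%:MP * 'X_i)); last first.
  by move=> i iS; rewrite ffunE /G iS mul_mpolyC.
rewrite (eq_bigr (fun i => (b i)%:MP) (P := fun i => i \notin S)); last first.
  by move=> i iS; rewrite ffunE /G (negbTE iS).
rewrite big_split /= prodX_set -!rmorph_prod /=.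
rewrite mulrAC -mpolyCM mul_mpolyC; congr ((_ * _) *: _).
by apply: eq_bigl => i; rewrite inE.
Qed.

Lemma mnmS_inj n : injective (@mnmS n).
Proof.
move=> S S' /mnmP H; apply/setP => i; have := H i; rewrite !mnmE.
by case: (i \in S); case: (i \in S').
Qed.

Lemma coef_sumS (R : comNzRingType) n (c : {set 'I_n} -> R) S :
  (\sum_(S' : {set 'I_n}) c S' *: 'X_[mnmS S'] : {mpoly R[n]})@_(mnmS S) = c S.
Proof.
rewrite raddf_sum (bigD1 S) //= big1 ?addr0.
  by rewrite mcoeffZ mcoeffX eqxx mulr1.
move=> S' nS; rewrite mcoeffZ mcoeffX.
case: eqP => [/mnmS_inj E|_]; last by rewrite mulr0.
by rewrite E eqxx in nS.
Qed.

Definition coefS (R : comNzRingType) n (z : 'I_n -> R) (S : {set 'I_n}) : R :=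
  \prod_(i in S) z i * \prod_(i in ~: S) (1 - z i).

Lemma G_SSSV_E (F : fieldType) n k (S : {set 'I_n}) :
  G_SSSV F k S = \sum_(j < k) yvar F n j * coefS (zvar F j) S + 1.
Proof.
rewrite /G_SSSV /Q_SSSV /Q_SSV mcoeffD raddf_sum /=.
have -> : \prod_(i < n) ('X_i + 1) = 
   \sum_(S' : {set 'I_n}) (\prod_(i in S') (1 : {mpoly F[nseed n k]}) * \prod_(i in ~: S') 1) *: 'X_[mnmS S'] :> {mpoly {mpoly F[nseed n k]}[n]}.
  rewrite -expand_prod; apply: eq_bigr => i _; by rewrite scale1r mpolyC1.
rewrite coef_sumS !big1_eq mulr1; congr (_ + _).
apply: eq_bigr => j _; rewrite mcoeffCM /Pxz.
rewrite (eq_bigr (fun i => zvar F j i *: 'X_i + (1 - zvar F j i)%:MP)); last first.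
  by move=> i _; rewrite mul_mpolyC.
by rewrite expand_prod coef_sumS.
Qed.

Section Part1.
Variable F : fieldType.

Definition lam n (c : F) (i : 'I_n) : F := if val i == 0%N then c else 1.

Definition gate n (c : F) (a b : 'I_n -> F) : seq (affine F n) :=
  [seq (lam c i * b i, [ffun i' => if i' == i then lam c i * a i else 0]) | i <- enum 'I_n].

Lemma prod_lam n (c : F) : (0 < n)%N -> \prod_(i < n) lam c i = c.
Proof.
move=> n0; rewrite (bigD1 (Ordinal n0)) //= big1 ?mulr1 /lam //=.
move=> i ni; case: eqP => // i0; case/eqP: ni; exact: val_inj.
Qed.

Lemma affine_gate n (c : F) (a b : 'I_n -> F) i :
  affine_poly (lam c i * b i, [ffun i' => if i' == i then lam c i * a i else 0]) =
  (lam c i)%:MP * (a i *: 'X_i + (b i)%:MP).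
Proof.
rewrite /affine_poly /= (bigD1 i) //= big1 ?addr0.
  rewrite ffunE eqxx mulrDr mpolyCM addrC; congr (_ + _).
  by rewrite [RHS]mul_mpolyC scalerA.
by move=> j /negbTE ji; rewrite ffunE ji scale0r.
Qed.

Lemma gate_poly n (c : F) (a b : 'I_n -> F) : (0 < n)%N ->
  \prod_(l <- gate c a b) affine_poly l = c *: \prod_(i < n) (a i *: 'X_i + (b i)%:MP).
Proof.
move=> n0; rewrite big_map big_enum /=.
rewrite (eq_bigr _ (fun i _ => affine_gate c a b i)) big_split /=.
by rewrite -rmorph_prod prod_lam // mul_mpolyC.
Qed.

Lemma gate_supp n (c : F) (a b : 'I_n -> F) i :
  affine_supp (lam c i * b i, [ffun i' => if i' == i then lam c i * a i else 0]) \subset [set i].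
Proof.
apply/subsetP => j; rewrite !inE ffunE /=; case: (j == i) => //.
by rewrite eqxx.
Qed.

Lemma gate_ml n (c : F) (a b : 'I_n -> F) :
  [forall j1 : 'I_(size (gate c a b)), forall j2 : 'I_(size (gate c a b)),
            (j1 < j2)%N ==>
            [disjoint affine_supp (nth (0, [ffun=> 0]) (gate c a b) j1)
                    & affine_supp (nth (0, [ffun=> 0]) (gate c a b) j2)]].
Proof.
apply/forallP => j1; apply/forallP => j2; apply/implyP => lt12.
have sz : size (gate c a b) = n by rewrite size_map size_enum_ord.
have h1 : (j1 < n)%N by have := ltn_ord j1; rewrite {2}sz.
have h2 : (j2 < n)%N by have := ltn_ord j2; rewrite {2}sz.
rewrite /gate !(nth_map (Ordinal h1)) ?size_enum_ord //.
rewrite -[j1 : nat]/(nat_of_ord (Ordinal h1)) -[j2 : nat]/(nat_of_ord (Ordinal h2)).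
rewrite -!enumT !nth_ord_enum.
apply: (disjointWl (gate_supp _ _ _ _)); apply: (disjointWr (gate_supp _ _ _ _)).
  rewrite disjoints1 inE; apply/eqP => /(congr1 val) /= E.
  by rewrite E ltnn in lt12.
all: by rewrite -enumT size_enum_ord.
Qed.

Lemma gate_size n (c : F) (a b : 'I_n -> F) :
  (\sum_(l <- gate c a b) (1 + #|affine_supp l|) <= 2 * n)%N.
Proof.
rewrite big_map big_enum /=.
apply: leq_trans (_ : \sum_(i < n) 2 <= _)%N.
  apply: leq_sum => i _; rewrite ltnS -(cards1 i); apply: subset_leq_card.
  exact: gate_supp.
by rewrite sum_nat_const card_ord muln2 mul2n.
Qed.

End Part1.

Lemma sum_le_const (A : Type) (s : seq A) (f : A -> nat) c :
  (forall x, f x <= c)%N -> (\sum_(x <- s) f x <= size s * c)%N.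
Proof.
move=> H; elim: s => [|x s IH]; first by rewrite big_nil.
by rewrite big_cons /= mulSn leq_add.
Qed.

Lemma part1 (F : fieldType) n k (n0 : (0 < n)%N) (al : 'I_(nseed n k) -> F) :
  computed_by_mlsps ((1 + k.+1 * (1 + 2 * n))%N%:R)
    (\sum_(S : {set 'I_n}) (G_SSSV F k S).@[al] *: 'X_[mnmS S]).
Proof.
pose yy j := (yvar F n j).@[al].
pose zz j i := (zvar F j i).@[al].
pose f := [seq gate (yy j) (zz j) (fun i => 1 - zz j i) | j <- enum 'I_k]
           ++ [:: gate 1 (fun=> 1) (fun=> 1)].
exists f; split.
- rewrite /sps_multilinear all_cat /= andbT gate_ml andbT.
  by apply/allP => P /mapP [j _ ->]; apply: gate_ml.
- rewrite ler_nat /sps_size leq_add2l.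
  rewrite big_cat big_map big_seq1 /= mulSn addnC leq_add ?leq_add2l ?gate_size //.
  apply: leq_trans (_ : size (enum 'I_k) * (1 + 2 * n) <= _)%N.
    by apply: sum_le_const => j; rewrite leq_add2l gate_size.
  by rewrite size_enum_ord.
- rewrite /sps_poly big_cat big_map big_seq1 /= gate_poly // scale1r.
  have GE S : (G_SSSV F k S).@[al] = \sum_(j < k) yy j * coefS (zz j) S + 1.
    rewrite G_SSSV_E mevalD meval1 raddf_sum /=; congr (_ + _).
    apply: eq_bigr => j _; rewrite mevalM /coefS mevalM !rmorph_prod /=.
    congr (_ * (_ * _)); apply: eq_bigr => i _; by rewrite mevalB meval1.
  rewrite !expand_prod big_enum /=.
  under [RHS]eq_bigr => S _ do rewrite GE scalerDl scale1r scaler_suml.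
  rewrite big_split /= exchange_big /=; congr (_ + _).
    apply: eq_bigr => j _.
    rewrite gate_poly // expand_prod scaler_sumr; apply: eq_bigr => S _.
    by rewrite scalerA.
  by apply: eq_bigr => S _; rewrite !big1_eq mulr1 scale1r.
Qed.

Section Comb.
Variable F : fieldType.
Variable N : nat.

Definition proj (T : {set 'I_N}) (m : 'X_{1..N}) : 'X_{1..N} :=
  [multinom if i \in T then m i else 0%N | i < N].

Lemma projU1 i T m m' :
  (proj (i |: T) m == proj (i |: T) m') = (m i == m' i) && (proj T m == proj T m').
Proof.
apply/eqP/andP => [/mnmP H|[/eqP e1 /eqP /mnmP e2]].
  split.
    by have := H i; rewrite !mnmE setU11 => ->.
  apply/eqP/mnmP => j; rewrite !mnmE; case jT: (j \in T) => //.
  by have := H j; rewrite !mnmE in_setU1 jT orbT.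
apply/mnmP => j; rewrite !mnmE in_setU1.
case: (eqVneq j i) => [->|_] //=.
by have := e2 j; rewrite !mnmE.
Qed.

Variable c : 'X_{1..N} -> F.

Lemma comb k : forall M : seq 'X_{1..N}, uniq M -> M != [::] ->
  (forall m, m \in M -> c m != 0) -> (size M <= 2 ^ k)%N ->
  exists (T : {set 'I_N}) u, (#|T| <= k)%N /\ \sum_(m <- M | proj T m == u) c m != 0.
Proof.
elim: k => [|k IH] [|m0 [|m1 M']] //= uM _ cM sM.
- exists set0, (proj set0 m0); split; first by rewrite cards0.
  by rewrite big_cons eqxx big_nil addr0 cM // mem_head.
- exists set0, (proj set0 m0); split; first by rewrite cards0.
  by rewrite big_cons eqxx big_nil addr0 cM // mem_head.
set M := [:: m0, m1 & M'] in uM cM sM *.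
have n01 : m0 != m1 by move: uM; rewrite /M /= inE negb_or => /andP [/andP [] ].
have [i Hi] : exists i, m0 i != m1 i.
  case/boolP: [exists i : 'I_N, m0 i != m1 i] => [/existsP //|/existsPn H].
  by case/eqP: n01; apply/mnmP => i; apply/eqP; move: (H i); rewrite negbK.
suff step : forall d : nat, [seq m : 'X_{1..N} <- M | m i == d] != [::] ->
    (size [seq m : 'X_{1..N} <- M | m i == d] <= 2 ^ k)%N ->
    exists (T : {set 'I_N}) u, (#|T| <= k.+1)%N /\ \sum_(m <- M | proj T m == u) c m != 0.
  have hs : (size [seq m : 'X_{1..N} <- M | m i == m0 i] + size [seq m : 'X_{1..N} <- M | m i == m1 i] <= 2 ^ k.+1)%N.
    rewrite !size_filter -count_predUI.
    rewrite (eq_count (a1 := predI _ _) (a2 := pred0)) ?count_pred0 ?addn0; last first.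
      move=> m /=; apply/negbTE/andP => [[/eqP e0 /eqP e1]].
      by move: Hi; rewrite -e0 e1 eqxx.
    by apply: leq_trans (count_size _ M) _.
  case: (leqP (size [seq m : 'X_{1..N} <- M | m i == m0 i]) (2 ^ k)) => h0.
    by apply: step h0; rewrite -size_eq0 -lt0n size_filter -has_count; apply/hasP; exists m0; rewrite ?mem_head.
  apply: step.
    by rewrite -size_eq0 -lt0n size_filter -has_count; apply/hasP; exists m1; rewrite ?inE ?eqxx ?orbT.
  rewrite expnS mul2n -addnn in hs.
  by rewrite -(leq_add2l (2 ^ k)); apply: leq_trans hs; rewrite leq_add2r ltnW.
move=> d nC sC.
have [T' [u' [hT' hs']]] := IH _ (filter_uniq _ (uM : uniq M)) nC
   (fun m mC => cM m (mem_subseq (filter_subseq _ _) mC)) sC.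
have [ms msC msu] : exists2 ms, ms \in [seq m : 'X_{1..N} <- M | m i == d] & proj T' ms == u'.
  case/boolP: (has (fun m => proj T' m == u') [seq m : 'X_{1..N} <- M | m i == d]) => [/hasP [ms h1 h2]|/hasPn H]; first by exists ms.
  by move: hs'; rewrite big_seq_cond big1 ?eqxx // => m /andP [mC pm]; move: (H m mC); rewrite pm.
exists (i |: T'), (proj (i |: T') ms); split.
  by rewrite cardsU1 -add1n leq_add ?leq_b1.
rewrite big_filter_cond in hs'.
move: msC; rewrite mem_filter => /andP [/eqP msd _].
rewrite (eq_bigl (fun m : 'X_{1..N} => (m i == d) && (proj T' m == u'))) // => m.
by rewrite projU1 msd (eqP msu).
Qed.
End Comb.

Lemma bits_inj n : forall i i' : nat, (i < 2 ^ n)%N -> (i' < 2 ^ n)%N ->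
  (forall k, (k < n)%N -> odd (i %/ 2 ^ k) = odd (i' %/ 2 ^ k)) -> i = i'.
Proof.
elim: n => [|n IH] i i' hi hi' H.
  by move: hi hi'; rewrite expn0 !ltnS !leqn0 => /eqP -> /eqP ->.
have h0 := H 0%N isT; rewrite expn0 !divn1 in h0.
have e : (i %/ 2 = i' %/ 2)%N.
  apply: IH.
  - by rewrite ltn_divLR // -expnSr.
  - by rewrite ltn_divLR // -expnSr.
  move=> k hk; rewrite -!divnMA -expnS; exact: H.
by rewrite -(ssrnat.odd_double_half i) -(ssrnat.odd_double_half i') -!divn2 e h0.
Qed.

Lemma set_of_index_inj n (i i' : 'I_(2 ^ n)) :
  set_of_index n i = set_of_index n i' -> i = i'.
Proof.
move/setP => H; apply: val_inj; apply: (bits_inj (ltn_ord i) (ltn_ord i')).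
by move=> k hk; have := H (Ordinal hk); rewrite !inE.
Qed.

Lemma coefS_ind (R : comNzRingType) n (A S : {set 'I_n}) :
  coefS (fun i => (i \in A)%:R : R) S = (S == A)%:R.
Proof.
rewrite /coefS; case: (eqVneq S A) => [->|neq].
  rewrite big1 => [|i ->] //; rewrite big1 ?mulr1 // => i; rewrite inE => /negbTE ->; by rewrite subr0.
have [i Hi] : exists i, (i \in S) != (i \in A).
  case/boolP: [exists i, (i \in S) != (i \in A)] => [/existsP //|/existsPn H].
  by case/eqP: neq; apply/setP => i; apply/eqP; move: (H i); rewrite negbK.
have iA : (i \in A) = ~~ (i \in S) by move: Hi; case: (i \in S); case: (i \in A).
case iS: (i \in S) iA => /= iA.
  by rewrite (bigD1 i) //= iA mul0r mul0r.
by rewrite (bigD1 i (P := fun i => i \in ~: S)) /= ?inE ?iS // iA subrr mul0r mulr0.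
Qed.

Lemma sum_nth_opt (V : nmodType) (A : Type) (s : seq A) k (g : option A -> V) :
  g None = 0 -> (size s <= k)%N ->
  \sum_(j < k) g (nth None (map Some s) j) = \sum_(x <- s) g (Some x).
Proof.
move=> g0; elim: s k => [|x s IH] [|k] //= hs.
- by rewrite big_ord0 big_nil.
- by rewrite big_nil big1 // => j _; rewrite nth_nil.
by rewrite big_ord_recl big_cons /= IH.
Qed.

Lemma comp_comp (R : comNzRingType) N M K (P : {mpoly R[N]}) (t : N.-tuple {mpoly R[M]})
   (w : M.-tuple {mpoly R[K]}) :
  (P \mPo t) \mPo w = P \mPo [tuple (tnth t i) \mPo w | i < N].
Proof.
rewrite [P \mPo t]comp_mpolyE [P \mPo _]comp_mpolyE raddf_sum /=; apply: eq_bigr => m _.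
rewrite comp_mpolyZ rmorph_prod /=; congr (_ *: _); apply: eq_bigr => i _.
by rewrite rmorphXn tnth_mktuple.
Qed.

Lemma rmorph_coefS (R R' : comNzRingType) (f : {rmorphism R -> R'}) n (z : 'I_n -> R) S :
  f (coefS z S) = coefS (fun i => f (z i)) S.
Proof.
rewrite /coefS rmorphM !rmorph_prod; congr (_ * _).
by apply: eq_bigr => i _; rewrite rmorphB rmorph1.
Qed.

Lemma eq_coefS (R : comNzRingType) n (z z' : 'I_n -> R) S :
  (forall i, z i = z' i) -> coefS z S = coefS z' S.
Proof.
by move=> e; rewrite /coefS; congr (_ * _); apply: eq_bigr => i _; rewrite e.
Qed.

Section Part2.
Variable F : fieldType.
Variables n k : nat.

Definition oa (T : {set 'I_(2 ^ n)}) (j : 'I_k) : option 'I_(2 ^ n) :=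
  nth None (map Some (enum T)) j.

Definition wv T (v : 'I_(nseed n k)) : {mpoly F[2 ^ n]} :=
  match split (v : 'I_(k + k * n)) with
  | inl j => if oa T j is Some a then 'X_a - 1 else 0
  | inr r => let ji := enum_val (cast_ord (esym (mxvec_cast k n)) r) in
     if oa T ji.1 is Some a then ((ji.2 \in set_of_index n a)%:R) else 0
  end.

Definition wt T := [tuple wv T v | v < nseed n k].

Lemma sig_y (T : {set 'I_(2 ^ n)}) j : yvar F n j \mPo wt T = if oa T j is Some a then 'X_a - 1 else 0.
Proof.
rewrite /yvar comp_mpolyXU -tnth_nth tnth_mktuple /wv.
have -> : split (lshift (k * n) j) = inl j := unsplitK (inl _ j).
by [].
Qed.

Lemma sig_z (T : {set 'I_(2 ^ n)}) j i : zvar F j i \mPo wt T =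
   if oa T j is Some a then (i \in set_of_index n a)%:R else 0.
Proof.
rewrite /zvar comp_mpolyXU -tnth_nth tnth_mktuple /wv.
have -> : split (rshift k (mxvec_index j i)) = inr (mxvec_index j i) :=
   unsplitK (inr _ (mxvec_index j i)).
by rewrite /= /mxvec_index cast_ordK enum_rankK.
Qed.

Lemma sig_G (T : {set 'I_(2 ^ n)}) (S : {set 'I_n}) : G_SSSV F k S \mPo wt T =
  \sum_(j < k) (if oa T j is Some a then ('X_a - 1) * (S == set_of_index n a)%:R else 0) + 1.
Proof.
rewrite G_SSSV_E rmorphD rmorph1 rmorph_sum /=; congr (_ + _).
apply: eq_bigr => j _; rewrite rmorphM /= sig_y rmorph_coefS /=.
rewrite (eq_coefS S (fun i => sig_z T j i)).
case: (oa T j) => [a|]; last by rewrite mul0r.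
by rewrite coefS_ind.
Qed.

Lemma sig_t (T : {set 'I_(2 ^ n)}) (i : 'I_(2 ^ n)) : (#|T| <= k)%N ->
  G_SSSV F k (set_of_index n i) \mPo wt T = if i \in T then 'X_i else 1.
Proof.
move=> hT; rewrite sig_G /oa.
rewrite (sum_nth_opt (g := fun o => if o is Some a then ('X_a - 1) * (set_of_index n i == set_of_index n a)%:R else 0 : {mpoly F[2 ^ n]})) //; last by rewrite -cardE.
rewrite big_enum /=.
have E (a : 'I_(2 ^ n)) : (set_of_index n i == set_of_index n a) = (i == a).
  by apply/eqP/eqP => [/set_of_index_inj|->].
under eq_bigr do rewrite E.
case: (boolP (i \in T)) => iT.
  rewrite (bigD1 i) //= eqxx mulr1 big1 ?addr0 ?subrK // => a /andP [_ ai].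
  by rewrite eq_sym (negbTE ai) mulr0.
rewrite big1 ?add0r // => a aT.
have -> : (i == a) = false by apply/negbTE; apply: contraNneq iT => ->.
by rewrite mulr0.
Qed.

End Part2.

Lemma R_coef (F : fieldType) N (P : {mpoly F[N]}) (T : {set 'I_N}) u :
  (P \mPo [tuple (if i \in T then 'X_i else 1) | i < N])@_u =
  \sum_(m <- msupp P | proj T m == u) P@_m.
Proof.
rewrite comp_mpolyE raddf_sum /= [RHS]big_mkcond /=; apply: eq_bigr => m _.
have -> : \prod_(i < N) tnth [tuple (if i \in T then 'X_i else 1) | i < N] i ^+ m i
   = 'X_[proj T m] :> {mpoly F[N]}.
  rewrite [RHS]mpolyXE_id; apply: eq_bigr => i _; rewrite tnth_mktuple mnmE.
  by case: (i \in T); rewrite ?expr1n ?expr0.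
by rewrite mcoeffZ mcoeffX; case: eqP; rewrite ?mulr1 ?mulr0.
Qed.

Lemma part2 (F : fieldType) n s (P : {mpoly F[2 ^ n]}) :
  (size (msupp P) <= s)%N ->
  (P != 0) = (P \mPo [tuple G_SSSV F (up_log 2 s) (set_of_index n i) | i < 2 ^ n] != 0).
Proof.
set k := up_log 2 s => hs.
case: (eqVneq P 0) => [->|nz]; first by rewrite comp_mpoly0 eqxx.
have hk : (size (msupp P) <= 2 ^ k)%N by apply: leq_trans hs (up_logP _ _).
have ne : msupp P != [::] by rewrite msupp_eq0.
have cnz : forall m, m \in msupp P -> P@_m != 0 by move=> m; rewrite -mcoeff_msupp.
have [T [u [hT hsum]]] := comb (c := fun m => P@_m) (msupp_uniq P) ne cnz hk.
symmetry; apply/negP => /eqP H0.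
have := congr1 (comp_mpoly (@wt F n k T)) H0; rewrite comp_mpoly0 comp_comp.
have -> : [tuple tnth [tuple G_SSSV F k (set_of_index n i) | i < 2 ^ n] i \mPo @wt F n k T | i < 2 ^ n]
   = [tuple (if i \in T then 'X_i else 1) | i < 2 ^ n].
  by apply: eq_from_tnth => i; rewrite !tnth_mktuple sig_t.
move/(congr1 (mcoeff u)); rewrite R_coef mcoeff0 => /eqP.
by rewrite (negbTE hsum).
Qed.

Theorem corollary5p10 (F : fieldType) :
  exists p : {mpoly rat[2]},
  forall n s : nat, (1 <= n)%N -> (1 <= s)%N ->
    succinct_generator
      (p.@[fun i : 'I_2 => if i == 0 then (up_log 2 s)%:R else n%:R])
      (@G_SSSV F n (up_log 2 s))
      (@sparse F (2 ^ n) s).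
Proof.
exists (1 + ('X_0 + 1) * (1 + 'X_1 + 'X_1)) => n s n1 s1.
have -> : (1 + ('X_0 + 1) * (1 + 'X_1 + 'X_1) : {mpoly rat[2]}).@[fun i : 'I_2 => if i == 0 then (up_log 2 s)%:R else n%:R]
   = ((1 + (up_log 2 s).+1 * (1 + 2 * n))%N)%:R.
  rewrite !mevalD !mevalM !mevalD !meval1 !mevalXU /=.
  rewrite -[(up_log 2 s).+1]addn1 !(natrD, natrM).
  ring.
split.
  by move=> al; apply: part1.
by move=> P; apply: part2.
Qed.
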